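(* Let $H$ be a poly-$\mathbb{Z}$ group, $A$ an $n\times n$ matrix over $\mathbb{Z}H$, and $f_A:\mathbb{Z}H^n\to\mathbb{Z}H^n$ the homomorphism of free $\mathbb{Z}H$-modules given by left multiplication by $A$ on columns. If the induced map $(\mathbb{Z}H/\Delta(H))^n\cong\mathbb{Z}^n\to\mathbb{Z}^n$, which is left multiplication by $\varepsilon(A)$, is injective, then $f_A$ is injective.
   Context: A group is poly-$\mathbb{Z}$ if it has a subnormal series all of whose factors are infinite cyclic. $\varepsilon:\mathbb{Z}H\to\mathbb{Z}$, $\sum n_ih_i\mapsto\sum n_i$, is the augmentation map, $\Delta(H)$ its kernel, and $\varepsilon(A)$ denotes the integer matrix obtained by applying $\varepsilon$ to each entry of $A$. *)

(* Defs.v *)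
(* Abstract (possibly infinite) groups are given by explicit
   operations on an eqType carrier; the integral group ring ZH is modelled by
   formal finite Z-linear combinations of group elements. *)
From HB Require Import structures.
From mathcomp Require Import all_boot all_order all_algebra.
Set Implicit Arguments. Unset Strict Implicit. Unset Printing Implicit Defensive.
Import Order.TTheory GRing.Theory Num.Theory.
Local Open Scope ring_scope.

Section Group.
Variables (T : eqType) (mul : T -> T -> T) (inv : T -> T) (one : T).

Definition is_group : Prop :=
  [/\ forall x y z, mul x (mul y z) = mul (mul x y) z,
      forall x, mul one x = x,
      forall x, mul x one = x,
      forall x, mul (inv x) x = one
    & forall x, mul x (inv x) = one].

Definition zpow (g : T) (m : int) : T :=
  match m with
  | Posz k => iter k (mul g) one
  | Negz k => iter k.+1 (mul (inv g)) one
  end.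

Definition is_subgroup (G : T -> Prop) : Prop :=
  [/\ G one, forall x y, G x -> G y -> G (mul x y) & forall x, G x -> G (inv x)].

Definition normal_in (N G : T -> Prop) : Prop :=
  [/\ is_subgroup N, forall x, N x -> G x &
      forall x y, N x -> G y -> N (mul (mul (inv y) x) y)].

Definition inf_cyclic_quotient (G N : T -> Prop) : Prop :=
  exists2 g, G g &
    (forall x, G x -> exists m : int, N (mul x (zpow g (- m)))) /\
    (forall m : int, N (zpow g m) -> m = 0).

Definition polyZ : Prop :=
  exists (k : nat) (G : nat -> T -> Prop),
    [/\ forall x, G 0%N x,
        forall x, G k x <-> x = one,
        forall i, (i < k)%N -> is_subgroup (G i),
        forall i, (i < k)%N -> normal_in (G i.+1) (G i)
      & forall i, (i < k)%N -> inf_cyclic_quotient (G i) (G i.+1)].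

(* Elements of the integral group ring ZH as formal sums  sum_p p.1 * p.2 *)
Definition ZH := seq (int * T).

Definition zh_coeff (s : ZH) (h : T) : int := \sum_(p <- s | p.2 == h) p.1.

Definition zh_eq0 (s : ZH) : Prop := forall h, zh_coeff s h = 0.

Definition zh_add (s t : ZH) : ZH := s ++ t.

Definition zh_mul (s t : ZH) : ZH :=
  [seq (p.1 * q.1, mul p.2 q.2) | p <- s, q <- t].

Definition zh_aug (s : ZH) : int := \sum_(p <- s) p.1.

Definition zh_mxv (n : nat) (A : 'I_n -> 'I_n -> ZH) (v : 'I_n -> ZH)
  (i : 'I_n) : ZH :=
  foldr zh_add [::] [seq zh_mul (A i j) (v j) | j <- enum 'I_n].

Definition aug_mx (n : nat) (A : 'I_n -> 'I_n -> ZH) : 'M[int]_n :=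
  \matrix_(i, j) zh_aug (A i j).

End Group.

(* Main.v *)
Require Import Defs.
From HB Require Import structures.
From mathcomp Require Import all_boot all_order all_algebra.
From mathcomp Require Import zify.
From Stdlib Require Import ClassicalEpsilon.
Import GRing.Theory Num.Theory.
Set Implicit Arguments. Unset Strict Implicit. Unset Printing Implicit Defensive.
Local Open Scope ring_scope.

Section Grp.
Variables (T : eqType) (mul : T -> T -> T) (inv : T -> T) (one : T).
Hypothesis HG : is_group mul inv one.

Lemma GmulA x y z : mul x (mul y z) = mul (mul x y) z.
Proof. by case: HG. Qed.
Lemma Gmul1g x : mul one x = x.
Proof. by case: HG. Qed.
Lemma Gmulg1 x : mul x one = x.
Proof. by case: HG. Qed.
Lemma GmulVg x : mul (inv x) x = one.
Proof. by case: HG. Qed.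
Lemma GmulgV x : mul x (inv x) = one.
Proof. by case: HG. Qed.

Lemma GmulKg x y : mul (inv x) (mul x y) = y.
Proof. by rewrite GmulA GmulVg Gmul1g. Qed.
Lemma GmulKVg x y : mul x (mul (inv x) y) = y.
Proof. by rewrite GmulA GmulgV Gmul1g. Qed.
Lemma GmulgI x y z : mul x y = mul x z -> y = z.
Proof. by move=> e; rewrite -(GmulKg x y) e GmulKg. Qed.
Lemma Ginv_uniq x y : mul x y = one -> inv x = y.
Proof. by move=> e; rewrite -(Gmulg1 (inv x)) -e GmulKg. Qed.

Lemma zpowS g m : zpow mul inv one g (m + 1) = mul g (zpow mul inv one g m).
Proof.
case: m => [k|k].
  by rewrite (_ : Posz k + 1 = Posz k.+1) //; lia.
case: k => [|k].
  by rewrite (_ : Negz 0 + 1 = 0) //= ?Gmulg1 ?GmulgV.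
rewrite (_ : Negz k.+1 + 1 = Negz k); last by rewrite !NegzE; lia.
by rewrite /zpow (iterS k.+1) GmulKVg.
Qed.

Lemma zpowP g m : zpow mul inv one g (m - 1) = mul (inv g) (zpow mul inv one g m).
Proof.
by rewrite -{2}(subrK 1 m) zpowS GmulKg.
Qed.

Lemma zpowD g m n : zpow mul inv one g (m + n) =
  mul (zpow mul inv one g m) (zpow mul inv one g n).
Proof.
elim/int_rect: m => [|k IH|k IH].
- by rewrite add0r Gmul1g.
- rewrite (_ : k.+1%:Z + n = (k%:Z + n) + 1); last by lia.
  by rewrite zpowS IH GmulA.
- rewrite (_ : - k.+1%:Z + n = (- k%:Z + n) - 1); last by lia.
  rewrite zpowP IH GmulA -zpowP; congr (mul (zpow _ _ _ _ _) _); lia.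
Qed.

Lemma zpow0 g : zpow mul inv one g 0 = one.
Proof. by []. Qed.

Lemma zpowN g m : inv (zpow mul inv one g m) = zpow mul inv one g (- m).
Proof. by apply: Ginv_uniq; rewrite -zpowD subrr. Qed.

Lemma zpow_sub (P : T -> Prop) g m : is_subgroup mul inv one P -> P g ->
  P (zpow mul inv one g m).
Proof.
case=> P1 PM PV Pg.
elim/int_rect: m => [|k IH|k IH] //.
- by rewrite (_ : k.+1%:Z = k%:Z + 1) ?zpowS; [apply: PM | lia].
- by rewrite (_ : - k.+1%:Z = - k%:Z - 1) ?zpowP; [apply: PM; [apply: PV|] | lia].
Qed.

Lemma Ginv_mul x y : inv (mul x y) = mul (inv y) (inv x).
Proof.
apply: Ginv_uniq; by rewrite -GmulA (GmulA y) GmulgV Gmul1g GmulgV.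
Qed.

End Grp.


Lemma poly_inj (I J : finType) (P : I -> J -> {poly int}) :
  (forall x : J -> int, (forall i, \sum_j (P i j).[1] * x j = 0) -> forall j, x j = 0) ->
  forall X : J -> {poly int}, (forall i, \sum_j P i j * X j = 0) -> forall j, X j = 0.
Proof.
move=> Hinj X HX.
have [N] : exists N, (\sum_j size (X j) <= N)%N by eexists.
elim: N X HX => [|N IH] X HX Hs.
  move=> j; apply/eqP; rewrite -size_poly_eq0.
  rewrite (bigD1 j) //= in Hs; by move: Hs; rewrite -leqn0 => /(leq_trans (leq_addr _ _)); rewrite leqn0.
have r1 : forall j, root (X j) 1.
  move=> j; apply/eqP; apply: (Hinj (fun j => (X j).[1])) => i; have := congr1 (fun p => p.[1]) (HX i).
  rewrite /= horner_sum horner0 => e; rewrite -[X in _ = X]e; apply: eq_bigr => j1 _; by rewrite hornerM.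
have [Y HY] : exists Y : J -> {poly int}, forall j, X j = Y j * ('X - 1%:P).
  apply: (@fin_all_exists _ (fun _ => {poly int}) (fun j Y => X j = Y * ('X - 1%:P))) => j; exact/factor_theorem.
have nz : 'X - 1%:P != 0 :> {poly int} by rewrite -size_poly_eq0 size_XsubC.
have HY0 : forall i, \sum_j P i j * Y j = 0.
  move=> i; apply: (mulIf nz); rewrite mul0r big_distrl /= -[X in _ = X](HX i).
  by apply: eq_bigr => j _; rewrite HY mulrA.
case: (boolP [forall j, X j == 0]) => [/forallP H j | ].
  exact/eqP.
rewrite negb_forall => /existsP [j0 Hj0].
have sY : forall j, (size (Y j) <= size (X j))%N.
  move=> j; rewrite HY; case: (eqVneq (Y j) 0) => [->|Yn0]; first by rewrite mul0r.
  by rewrite size_Mmonic ?monicXsubC // size_XsubC addn2.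
have Y0 : forall j, Y j = 0.
  apply: IH => //.
  have lt0 : (size (Y j0) < size (X j0))%N.
    have Yn0 : Y j0 != 0 by apply: contraNneq Hj0 => e; rewrite HY e mul0r.
    by rewrite HY size_Mmonic ?monicXsubC // size_XsubC addn2.
  rewrite -ltnS; apply: leq_trans Hs.
  rewrite (bigD1 j0) //= [X in (_ <= X)%N](bigD1 j0) //=.
  rewrite -addSn leq_add //; exact: leq_sum.
by move=> j; rewrite HY Y0 mul0r.
Qed.


Lemma toep_inj (I J : finType) (e : I -> J -> int -> int) (M : nat) :
  (forall i j a, (a < - M%:Z) || (M%:Z < a) -> e i j a = 0) ->
  (forall x : J -> int,
     (forall i, \sum_j (\sum_(a < M.*2.+1) e i j (a%:Z - M%:Z)) * x j = 0) ->
     forall j, x j = 0) ->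
  forall x : J * 'I_(M.*2.+1) -> int,
  (forall i (r : 'I_((M.*2.+1).*2)),
     \sum_(js : J * 'I_(M.*2.+1)) e i js.1 (r%:Z - js.2%:Z - M%:Z) * x js = 0) ->
  forall js, x js = 0.
Proof.
move=> Hsupp Hinj x Hx.
pose P i j := \poly_(a < M.*2.+1) e i j (a%:Z - M%:Z).
pose X j := \poly_(s < M.*2.+1) x (j, inord s).
have Pc : forall i j (a : nat), (P i j)`_a = e i j (a%:Z - M%:Z).
  move=> i j a; rewrite coef_poly; case: ifP => // /negbT; rewrite -leqNgt => h.
  by rewrite Hsupp //; apply/orP; right; lia.
have Xc : forall j (s : 'I_(M.*2.+1)), (X j)`_s = x (j, s).
  by move=> j s; rewrite coef_poly ltn_ord inord_val.
have Xc0 : forall j (u : nat), (M.*2.+1 <= u)%N -> (X j)`_u = 0.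
  by move=> j u h; rewrite coef_poly ltnNge h.
have H := @poly_inj I J P.
have HX : forall j, X j = 0.
  apply: H.
    move=> y Hy j; apply: (Hinj y) => i; rewrite -[X in _ = X](Hy i); apply: eq_bigr => j' _.
    by rewrite horner_poly; congr (_ * _); apply: eq_bigr => a _; rewrite expr1n mulr1.
  move=> i; apply/polyP => k; rewrite coef0 coef_sum.
  have step : forall j, (P i j * X j)`_k =
      \sum_(s < M.*2.+1) e i j (k%:Z - s%:Z - M%:Z) * x (j, s).
    move=> j; rewrite coefMr.
    rewrite (big_ord_widen _ (fun u => (P i j)`_(k - u) * (X j)`_u) (leq_addr (M.*2.+1) k.+1)).
    transitivity (\sum_(s < M.*2.+1) e i j (k%:Z - s%:Z - M%:Z) * (X j)`_s); last first.
      by apply: eq_bigr => s _; rewrite Xc.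
    rewrite (big_ord_widen _ (fun u => e i j (k%:Z - u%:Z - M%:Z) * (X j)`_u) (leq_addl k.+1 (M.*2.+1))).
    rewrite big_mkcond [RHS]big_mkcond; apply: eq_bigr => u _.
    case: (ltnP u k.+1) => h1; case: (ltnP u M.*2.+1) => h2 /=.
    - by rewrite Pc; congr (e _ _ _ * _); lia.
    - by rewrite Xc0 // mulr0.
    - by rewrite Hsupp ?mul0r //; apply/orP; left; lia.
    - by [].
  rewrite (eq_bigr _ (fun j _ => step j)).
  case: (ltnP k (M.*2.+1).*2) => hk.
    rewrite -[X in _ = X](Hx i (Ordinal hk)) pair_big /=.
    by apply: eq_bigr => [[j s]] _.
  rewrite big1 // => j _; rewrite big1 // => s _.
  by rewrite Hsupp ?mul0r //; apply/orP; right; have := ltn_ord s; lia.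
move=> [j s]; by rewrite -Xc HX coef0.
Qed.


Section Main.
Variables (T : eqType) (mul : T -> T -> T) (inv : T -> T) (one : T).
Hypothesis HG : is_group mul inv one.

Definition mxv (I J : finType) (A : I -> J -> ZH T) (v : J -> ZH T) (i : I) : ZH T :=
  foldr (@zh_add T) [::] [seq zh_mul mul (A i j) (v j) | j <- enum J].

Lemma coeff_cat (s t : ZH T) h : zh_coeff (s ++ t) h = zh_coeff s h + zh_coeff t h.
Proof. by rewrite /zh_coeff big_cat. Qed.

Lemma coeff_mxv (I J : finType) (A : I -> J -> ZH T) v i h :
  zh_coeff (mxv A v i) h = \sum_j zh_coeff (zh_mul mul (A i j) (v j)) h.
Proof.
rewrite /mxv -big_enum /=.
elim: (enum J) => [|j r IH] /=; first by rewrite big_nil /zh_coeff big_nil.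
by rewrite /zh_add coeff_cat IH big_cons.
Qed.

Lemma coeff_mul (s t : ZH T) h : zh_coeff (zh_mul mul s t) h =
  \sum_(p <- s) \sum_(q <- t) (if mul p.2 q.2 == h then p.1 * q.1 else 0).
Proof.
rewrite /zh_coeff /zh_mul big_mkcond /=.
by rewrite big_allpairs_dep.
Qed.

Lemma coeff_map (s : ZH T) (P : pred (int * T)) (f : int * T -> T) h :
  zh_coeff [seq (p.1, f p) | p <- [seq p <- s | P p]] h =
  \sum_(p <- s) (if P p && (f p == h) then p.1 else 0).
Proof.
rewrite /zh_coeff big_map big_filter_cond /= big_mkcond.
by apply: eq_bigr => p _; rewrite andbC.
Qed.

Lemma aug_map (s : ZH T) (P : pred (int * T)) (f : int * T -> T) :
  zh_aug [seq (p.1, f p) | p <- [seq p <- s | P p]] = \sum_(p <- s | P p) p.1.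
Proof. by rewrite /zh_aug big_map big_filter. Qed.


Lemma leq_sum_mem (I : eqType) (r : seq I) (F : I -> nat) x :
  x \in r -> (F x <= \sum_(y <- r) F y)%N.
Proof. by move=> xr; rewrite (big_rem x) //= leq_addr. Qed.

Lemma coeff_mul_map (s t : ZH T) (P Q : pred (int * T)) (f f' : int * T -> T) h :
  zh_coeff (zh_mul mul [seq (p.1, f p) | p <- [seq p <- s | P p]]
                       [seq (q.1, f' q) | q <- [seq q <- t | Q q]]) h =
  \sum_(p <- s) \sum_(q <- t)
     (if [&& P p, Q q & mul (f p) (f' q) == h] then p.1 * q.1 else 0).
Proof.
rewrite coeff_mul big_map big_filter big_mkcond; apply: eq_bigr => p _.
case: (P p) => /=; last by rewrite big1.
rewrite big_map big_filter big_mkcond; apply: eq_bigr => q _.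
by case: (Q q).
Qed.

Lemma pair_sum (I J : finType) (F : I * J -> int) :
  \sum_(ij : I * J) F ij = \sum_i \sum_j F (i, j).
Proof. by rewrite pair_big; apply: eq_bigr => [[]]. Qed.

Definition good (P : T -> Prop) :=
 forall (I J : finType) (A : I -> J -> ZH T) (v : J -> ZH T),
 (forall i j p, p \in A i j -> P p.2) -> (forall j p, p \in v j -> P p.2) ->
 (forall x : J -> int, (forall i, \sum_j zh_aug (A i j) * x j = 0) -> forall j, x j = 0) ->
 (forall i, zh_eq0 (mxv A v i)) -> forall j, zh_eq0 (v j).

Lemma good_base : good (fun x => x = one).
Proof.
move=> I J A v HA Hv Hinj Hav j h.
case: (eqVneq h one) => [->|hn]; last first.
  rewrite /zh_coeff big1_seq // => p /andP [/eqP e pin].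
  by move: (Hv _ _ pin); rewrite e => eh; rewrite eh eqxx in hn.
have coeff1 : forall s : ZH T, (forall p, p \in s -> p.2 = one) -> zh_coeff s one = zh_aug s.
  move=> s Hs; rewrite /zh_coeff /zh_aug big_mkcond; apply: eq_big_seq => p pin.
  by rewrite Hs // eqxx.
rewrite coeff1; last by move=> p; apply: Hv.
apply: (Hinj (fun j => zh_aug (v j))) => i.
rewrite -[X in _ = X](Hav i one) coeff_mxv; apply: eq_bigr => j' _.
rewrite coeff_mul /zh_aug big_distrlr /=; apply: eq_big_seq => p pin.
apply: eq_big_seq => q qin.
by rewrite (HA _ _ _ pin) (Hv _ _ qin) (Gmulg1 HG) // eqxx.
Qed.


Section Step.
Variables (Gi N : T -> Prop) (g : T).
Hypotheses (HGi : is_subgroup mul inv one Gi) (Hn : normal_in mul inv one N Gi).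
Hypotheses (Gg : Gi g) (Hdec : forall x, Gi x -> exists m : int, N (mul x (zpow mul inv one g (- m))))
  (Huniq : forall m : int, N (zpow mul inv one g m) -> m = 0).

Local Notation zp m := (zpow mul inv one g m).

Definition deg (x : T) : int :=
  epsilon (inhabits 0) (fun m : int => N (mul x (zp (- m)))).

Lemma HN : is_subgroup mul inv one N. Proof. by case: Hn. Qed.
Lemma NGi x : N x -> Gi x. Proof. by case: Hn => _ H _; apply: H. Qed.
Lemma Nmul x y : N x -> N y -> N (mul x y). Proof. by case: HN => _ H _; apply: H. Qed.
Lemma Ninv x : N x -> N (inv x). Proof. by case: HN => _ _ H; apply: H. Qed.
Lemma Nconj x y : N x -> Gi y -> N (mul (mul (inv y) x) y).
Proof. by case: Hn => _ _ H; apply: H. Qed.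
Lemma N1 : N one. Proof. by case: HN. Qed.
Lemma Gimul x y : Gi x -> Gi y -> Gi (mul x y). Proof. by case: HGi => _ H _; apply: H. Qed.
Lemma Gzp m : Gi (zp m). Proof. exact: zpow_sub. Qed.

Lemma degP x : Gi x -> N (mul x (zp (- deg x))).
Proof. by move=> Gx; apply: (epsilon_spec (inhabits 0) (fun m : int => N (mul x (zp (- m))))); apply: Hdec. Qed.

Lemma deg_uniq x m : Gi x -> N (mul x (zp (- m))) -> deg x = m.
Proof.
move=> Gx Nm; have Na := degP Gx.
have := Nmul (Ninv Na) Nm.
rewrite (Ginv_mul HG) (zpowN HG) opprK -(GmulA HG) (GmulKg HG) -(zpowD HG) => /Huniq.
by move/eqP; rewrite subr_eq0 => /eqP.
Qed.

Lemma deg_mul x y : Gi x -> Gi y -> deg (mul x y) = deg x + deg y.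
Proof.
move=> Gx Gy; apply: deg_uniq; first exact: Gimul.
have Nx := degP Gx; have Ny := degP Gy.
have := Nmul Nx (Nconj Ny (Gzp (- deg x))).
rewrite (zpowN HG) opprK.
congr N.
rewrite -!(GmulA HG) (GmulA HG (zp _) (zp _)) -(zpowD HG) addNr /= (Gmul1g HG) -(zpowD HG).
congr (mul x (mul y (zp _))); by rewrite opprD addrC.
Qed.

Lemma deg_zp m : deg (zp m) = m.
Proof. by apply: deg_uniq; [exact: Gzp | rewrite -(zpowD HG) subrr; exact: N1]. Qed.

Lemma deg0_N x : Gi x -> deg x = 0 -> N x.
Proof. by move=> Gx e; have := degP Gx; rewrite e oppr0 /= (Gmulg1 HG). Qed.

Lemma N_deg0 x : N x -> deg x = 0.
Proof. by move=> Nx; apply: deg_uniq; [exact: NGi | rewrite oppr0 /= (Gmulg1 HG)]. Qed.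


Ltac gi := repeat first [exact: Gzp | assumption | apply: Gimul].

Lemma good_step : good N -> good Gi.
Proof.
move=> IH I J A v HA Hv Hinj Hav.
pose M := (\sum_i \sum_j \sum_(p <- A i j) `|deg p.2| + \sum_j \sum_(q <- v j) `|deg q.2|)%N.
have bA : forall i j p, p \in A i j -> (`|deg p.2| <= M)%N.
  move=> i j p pin; rewrite /M; apply: leq_trans (leq_addr _ _).
  apply: leq_trans (leq_sum_mem _ (mem_index_enum i)).
  apply: leq_trans (leq_sum_mem _ (mem_index_enum j)).
  exact: (leq_sum_mem (fun p : int * T => `|deg p.2|%N)).
have bv : forall j q, q \in v j -> (`|deg q.2| <= M)%N.
  move=> j q qin; rewrite /M; apply: leq_trans (leq_addl _ _).
  apply: leq_trans (leq_sum_mem _ (mem_index_enum j)).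
  exact: (leq_sum_mem (fun p : int * T => `|deg p.2|%N)).
clearbody M.
have ordP : forall d : int, (`|d| <= M)%N -> exists s : 'I_(M.*2.+1), s%:Z - M%:Z = d.
  move=> d hd; have h1 : (absz (d + M%:Z)%R < M.*2.+1)%N by lia.
  by exists (Ordinal h1) => /=; lia.
pose bb (s : 'I_(M.*2.+1)) : int := s%:Z - M%:Z.
pose cc (r : 'I_((M.*2.+1).*2)) : int := r%:Z - (M.*2)%:Z.
pose B := fun (ir : I * 'I_((M.*2.+1).*2)) (js : J * 'I_(M.*2.+1)) =>
  [seq (p.1, mul (mul (zp (- cc ir.2)) p.2) (zp (bb js.2))) |
     p <- [seq p <- A ir.1 js.1 | deg p.2 == cc ir.2 - bb js.2]].
pose w := fun js : J * 'I_(M.*2.+1) =>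
  [seq (q.1, mul (zp (- bb js.2)) q.2) | q <- [seq q <- v js.1 | deg q.2 == bb js.2]].
have Hw : forall js, zh_eq0 (w js).
  apply: (IH _ _ B w).
  - move=> [i r] [j s] p' /mapP [p]; rewrite mem_filter => /andP [/eqP dp pin] -> /=.
    have Gp := HA _ _ _ pin.
    apply: deg0_N; first by gi.
    rewrite !deg_mul ?deg_zp; try by gi.
    by move: dp => /= ->; lia.
  - move=> [j s] q' /mapP [q]; rewrite mem_filter => /andP [/eqP dq qin] -> /=.
    have Gq := Hv _ _ qin.
    apply: deg0_N; first by gi.
    rewrite !deg_mul ?deg_zp; try by gi.
    by move: dq => /= ->; lia.
  - move=> x Hx.
    apply: (@toep_inj I J (fun i j a => \sum_(p <- A i j | deg p.2 == a) p.1) M).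
    + move=> i j a /orP ha; rewrite big1_seq // => p /andP [/eqP dp pin].
      by have := bA _ _ _ pin; rewrite dp; case: ha => ha; lia.
    + move=> y Hy; apply: Hinj => i; rewrite -[X in _ = X](Hy i).
      apply: eq_bigr => j _; congr (_ * _).
      rewrite /zh_aug (exchange_big_dep xpredT) //=; apply: eq_big_seq => p pin.
      have [a0 ea0] := ordP _ (bA _ _ _ pin).
      rewrite (bigD1 a0) /=; last by rewrite ea0.
      rewrite big1 ?addr0 // => a /andP [/eqP da na].
      have e : a = a0 by (apply: ord_inj; move: ea0 da; move: (deg p.2) => dd; clear -a a0 dd; lia).
      by rewrite e eqxx in na.

    + move=> i r; rewrite -[X in _ = X](Hx (i, r)); apply: eq_bigr => [[j s]] _ /=.
      congr (_ * _); rewrite /B /= aug_map.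
      have -> : cc r - bb s = r%:Z - s%:Z - M%:Z by rewrite /cc /bb; lia.
      by [].
  - move=> [i r] h; rewrite coeff_mxv pair_sum /= /B /w /=.
    under eq_bigr => j _ do under eq_bigr => s _ do rewrite coeff_mul_map.
    have step : forall j, \sum_(s < M.*2.+1) \sum_(p <- A i j) \sum_(q <- v j)
        (if [&& deg p.2 == cc r - bb s, deg q.2 == bb s &
               mul (mul (mul (zp (- cc r)) p.2) (zp (bb s))) (mul (zp (- bb s)) q.2) == h]
         then p.1 * q.1 else 0) =
       \sum_(p <- A i j) \sum_(q <- v j)
        (if (deg p.2 + deg q.2 == cc r) && (mul (zp (- cc r)) (mul p.2 q.2) == h)
         then p.1 * q.1 else 0).
      move=> j; rewrite exchange_big /=; apply: eq_big_seq => p pin.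
      rewrite exchange_big /=; apply: eq_big_seq => q qin.
      have [s0 es0] := ordP _ (bv _ _ qin).
      rewrite (bigD1 s0) //= big1 ?addr0.
        have -> : bb s0 = deg q.2 by [].
        rewrite eqxx /=.
        have -> : (deg p.2 == cc r - deg q.2) = (deg p.2 + deg q.2 == cc r).
          by apply/eqP/eqP => H; lia.
        rewrite -!(GmulA HG) (GmulA HG (zp _) (zp _)) -(zpowD HG) addrN /= (Gmul1g HG).
        by [].
      move=> s ns; case: ifP => // /and3P [_ /eqP ds _].
      have e : s = s0.
        apply: ord_inj; move: ds es0; rewrite /bb.
        move: (deg q.2) => dd; clear -s s0 dd; lia.
      by rewrite e eqxx in ns.
    rewrite (eq_bigr _ (fun j _ => step j)).
    case: (classic (N h)) => Nh.
    * rewrite -[X in _ = X](Hav i (mul (zp (cc r)) h)) coeff_mxv; apply: eq_bigr => j _.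
      rewrite coeff_mul; apply: eq_big_seq => p pin; apply: eq_big_seq => q qin.
      have Gp := HA _ _ _ pin; have Gq := Hv _ _ qin.
      congr (if _ then _ else _); apply/idP/idP.
        case/andP => _ /eqP e; by rewrite -e -(zpowN HG) (GmulKVg HG) eqxx.
      move/eqP => e; apply/andP; split.
        rewrite -deg_mul // e deg_mul ?deg_zp ?(N_deg0 Nh) ?addr0 //; try by gi.
        exact: NGi.
      by rewrite e -(zpowN HG) (GmulKg HG).
    * rewrite big1 // => j _; rewrite big1_seq // => p pin; rewrite big1_seq // => q qin.
      have Gp := HA _ _ _ pin; have Gq := Hv _ _ qin.
      case: ifP => // /andP [/eqP dd /eqP e]; exfalso; apply: Nh; rewrite -e.
      apply: deg0_N; first by gi.
      rewrite !deg_mul ?deg_zp; try by gi.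
      by rewrite -?addrA dd addNr.
move=> j h; rewrite /zh_coeff big_mkcond.
case: (boolP (has (fun q : int * T => q.2 == h) (v j))) => [/hasP [q0 q0in /eqP e0] | /hasPn nh]; last first.
  by rewrite big1_seq // => q qin; rewrite (negbTE (nh q qin)).
have [s0 es0] := ordP _ (bv _ _ q0in).
have := Hw (j, s0) (mul (zp (- bb s0)) h); rewrite /w /= coeff_map => e1; rewrite -[X in _ = X]e1.
apply: eq_big_seq => q qin.
case: (eqVneq q.2 h) => [eq|ne].
  by rewrite eq eqxx andbT -e0 -es0 eqxx.
have -> : (mul (zp (- bb s0)) q.2 == mul (zp (- bb s0)) h) = false.
  by apply/negbTE/eqP => /(GmulgI HG) /eqP; rewrite (negbTE ne).
by rewrite andbF.
Qed.

End Step.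

Lemma good_ext (P Q : T -> Prop) : (forall x, Q x -> P x) -> good P -> good Q.
Proof.
move=> QP gP I J A v HA Hv; apply: gP => [i j p pin|j p pin]; apply: QP.
  exact: HA pin.
exact: Hv pin.
Qed.

Lemma good_polyZ (G : nat -> T -> Prop) k :
  (forall x, G k x <-> x = one) ->
  (forall i, (i < k)%N -> is_subgroup mul inv one (G i)) ->
  (forall i, (i < k)%N -> normal_in mul inv one (G i.+1) (G i)) ->
  (forall i, (i < k)%N -> inf_cyclic_quotient mul inv one (G i) (G i.+1)) ->
  forall d, (d <= k)%N -> good (G (k - d)%N).
Proof.
move=> Gk Gs Gn Gc; elim=> [|d IH] hd.
  rewrite subn0; apply: (good_ext _ good_base) => x; exact: (proj1 (Gk x)).
have lt : (k - d.+1 < k)%N by lia.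
have e : (k - d)%N = (k - d.+1).+1 by lia.
have := IH (ltnW hd); rewrite e => IH'.
have [g Gg [Hdec Huniq]] := Gc _ lt.
exact: (good_step (Gs _ lt) (Gn _ lt) Gg Hdec Huniq IH').
Qed.

End Main.

Unset Implicit Arguments.
Set Strict Implicit.

Theorem mainTheorem14 (T : eqType) (mul : T -> T -> T) (inv : T -> T)
    (one : T) (n : nat) (A : 'I_n -> 'I_n -> ZH T) :
  is_group mul inv one ->
  polyZ mul inv one ->
  (forall x : 'cV[int]_n, aug_mx A *m x = 0 -> x = 0) ->
  forall v : 'I_n -> ZH T,
    (forall i, zh_eq0 (zh_mxv mul A v i)) -> forall i, zh_eq0 (v i).
Proof.
move=> HG [k [G [G0 Gk Gs Gn Gc]]] Hinj v Hav.
have := good_polyZ HG Gk Gs Gn Gc (leqnn k); rewrite subnn => g0.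
apply: (g0 _ _ A v) => //.
move=> x Hx j.
have H : (\col_j x j) = 0.
  apply: Hinj; apply/matrixP => i j'; rewrite !mxE -[RHS](Hx i).
  by apply: eq_bigr => k0 _; rewrite !mxE.
by have := congr1 (fun m : 'cV[int]_n => m j 0) H; rewrite !mxE.
Qed.
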